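(* For every integer $n\ge 1$, let \[V'_n=\{t_{3i+1}t_{3i+3}-t_{3i+2}t_{3n+1} : i=0,\dots,n-1\},\] \[V''_n=\{t_{3i+1}t_{3i+3}t_{3j+2}-t_{3j+1}t_{3j+3}t_{3i+2} : 0\le i<j\le n-1\}.\] Then $V_n=V'_n\cup V''_n$ is the universal Gröbner basis of the toric ideal $I_{P(2_n)}$.
   Context: Let $e_k\in\mathbb{R}^{2n+1}$ be standard basis vectors and let $M_n$ be the $(2n+1)\times(3n+1)$ matrix with columns $m_{3i+1}=e_{2i+1}+e_{2n+1}$, $m_{3i+2}=e_{2i+1}+e_{2i+2}+e_{2n+1}$, $m_{3i+3}=e_{2i+2}+e_{2n+1}$ for $i=0,\dots,n-1$, and $m_{3n+1}=e_{2n+1}$ (these are the nonzero codewords of the code $P(2_n)$). The toric ideal $I_{P(2_n)}$ is the kernel of $\mathbb{C}[t_1,\dots,t_{3n+1}]\to\mathbb{C}[x_1,\dots,x_{2n+1}]$, $t_k\mapsto x^{m_k}$. The universal Gröbner basis of an ideal is the union of its reduced Gröbner bases over all monomial orders. *)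

(* Defs.v *)
From mathcomp Require Import all_boot all_algebra.
From mathcomp Require Import Rstruct complex.
From mathcomp Require Import mpoly.
From Stdlib Require Import Reals.

Set Implicit Arguments.
Unset Strict Implicit.
Unset Printing Implicit Defensive.

Import GRing.Theory.
Local Open Scope ring_scope.

Definition C : fieldType := (Rdefinitions.R)[i].

Record monomial_order (k : nat) := MonomialOrder {
  mo_le :> rel 'X_{1..k};
  mo_refl : reflexive mo_le;
  mo_antisym : antisymmetric mo_le;
  mo_trans : transitive mo_le;
  mo_total : total mo_le;
  mo_mul : forall a b c, mo_le a b -> mo_le (a + c)%MM (b + c)%MM;
  mo_zero : forall a, mo_le 0%MM a
}.

Section Groebner.
Variables (F : fieldType) (k : nat).

Definition lead_mon (ord : monomial_order k) (p : {mpoly F[k]}) (m : 'X_{1..k}) :=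
  m \in msupp p /\ forall m', m' \in msupp p -> ord m' m.

Definition is_reduced_GB (ord : monomial_order k) (I : pred {mpoly F[k]})
    (G : seq {mpoly F[k]}) :=
  [/\ forall g, g \in G -> I g,
      forall g, g \in G -> exists2 mg, lead_mon ord g mg & g@_mg = 1,
      forall f, I f -> f != 0 -> exists g, g \in G /\
          exists mg mf, [/\ lead_mon ord g mg, lead_mon ord f mf & (mg <= mf)%MM]
    & forall g g', g \in G -> g' \in G -> g' != g ->
          forall mg', lead_mon ord g' mg' ->
          forall m, m \in msupp g -> ~~ (mg' <= m)%MM ].

Definition in_universal_GB (I : pred {mpoly F[k]}) (g : {mpoly F[k]}) :=
  exists (ord : monomial_order k) (G : seq {mpoly F[k]}),
    is_reduced_GB ord I G /\ g \in G.

End Groebner.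

(* standard basis vector e_{l+1} of N^{2n+1} (0-based index l) *)
Definition ebv (n l : nat) : 'X_{1..(2 * n).+1} :=
  [multinom (i == l :> nat : nat) | i < (2 * n).+1].

(* column m_{j+1} of M_n (0-based index j, 0 <= j <= 3n):
   m_{3i+1} = e_{2i+1} + e_{2n+1}, m_{3i+2} = e_{2i+1} + e_{2i+2} + e_{2n+1},
   m_{3i+3} = e_{2i+2} + e_{2n+1}, m_{3n+1} = e_{2n+1}. *)
Definition colM (n j : nat) : 'X_{1..(2 * n).+1} :=
  if ltn j (muln 3 n) then
    let i := divn j 3 in
    match modn j 3 with
    | 0 => (ebv n (2 * i)%nat + ebv n (2 * n)%nat)%MM
    | 1 => (ebv n (2 * i)%nat + ebv n (2 * i).+1%nat + ebv n (2 * n)%nat)%MM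
    | _ => (ebv n (2 * i).+1%nat + ebv n (2 * n)%nat)%MM
    end
  else ebv n (2 * n)%nat.

(* The toric ideal I_{P(2_n)}: kernel of C[t_1..t_{3n+1}] -> C[x_1..x_{2n+1}],
   t_k |-> x^{m_k}. *)
Definition toric_ideal (n : nat) : pred {mpoly C[(3 * n).+1]} :=
  fun p => comp_mpoly [tuple 'X_[colM n k] | k < (3 * n).+1] p == 0.

(* the variable t_k, 1 <= k <= 3n+1 *)
Definition tv (n k : nat) : {mpoly C[(3 * n).+1]} := 'X_(inord k.-1).

Definition Vp (n i : nat) : {mpoly C[(3 * n).+1]} :=
  tv n (3 * i + 1)%nat * tv n (3 * i + 3)%nat - tv n (3 * i + 2)%nat * tv n (3 * n + 1)%nat.

Definition Vpp (n i j : nat) : {mpoly C[(3 * n).+1]} :=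
  tv n (3 * i + 1)%nat * tv n (3 * i + 3)%nat * tv n (3 * j + 2)%nat
  - tv n (3 * j + 1)%nat * tv n (3 * j + 3)%nat * tv n (3 * i + 2)%nat.

Definition inV (n : nat) (v : {mpoly C[(3 * n).+1]}) : Prop :=
  (exists2 i, (i < n)%nat & v = Vp n i) \/
  (exists i j, (i < j < n)%nat /\ v = Vpp n i j).

Arguments toric_ideal n : clear implicits.
Arguments inV n v : clear implicits.

(* Main.v *)
Require Import Defs.
From mathcomp Require Import all_boot all_algebra.
From mathcomp Require Import mpoly zify.
From Stdlib Require Import Classical.

Set Implicit Arguments.
Unset Strict Implicit.
Unset Printing Implicit Defensive.
Import GRing.Theory.


Definition at_ {s} (m : 'X_{1..s.+1}) (p : nat) : nat := m (inord p).

Lemma at_D s (m1 m2 : 'X_{1..s.+1}) p : at_ (m1 + m2)%MM p = (at_ m1 p + at_ m2 p)%N.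
Proof. by rewrite /at_ mnmDE. Qed.

Lemma at_val s (m : 'X_{1..s.+1}) (i : 'I_s.+1) : at_ m i = m i.
Proof. by rewrite /at_ inord_val. Qed.

Section Toric.
Variable n : nat.
Local Notation k := (3 * n).+1.
Local Notation mono := 'X_{1..k}.

Definition E (p : nat) : mono := [multinom (i == p :> nat : nat) | i < k].

Lemma E_at p q : (q < k)%N -> at_ (E p) q = (q == p).
Proof. by move=> h; rewrite /at_ mnmE inordK. Qed.

Lemma ebv_at a l : (l < (2 * n).+1)%N -> at_ (ebv n a) l = (l == a).
Proof. by move=> h; rewrite /at_ /ebv mnmE inordK. Qed.

Lemma colM_top i : (i < k)%N -> at_ (colM n i) (2 * n) = 1%N.
Proof.
move=> hi; rewrite /colM; case: ifP => h3; last first.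
  have {h3} h3 : 3 * n <= i by rewrite leqNgt; apply/negbT.
  rewrite ebv_at //; lia.
have {h3} h3 : i < 3 * n := h3.
  have := divn_eq i 3; have := ltn_pmod i (isT : (0 < 3)%N).
  case: (i %% 3) => [|[|[|r]]] //= _ e; rewrite ?at_D !ebv_at //; lia.
Qed.

Lemma colM_ev i j : (i < k)%N -> (j < n)%N ->
  at_ (colM n i) (2 * j) = ((i == 3 * j) + (i == 3 * j + 1))%N.
Proof.
move=> hi hj; rewrite /colM; case: ifP => h3; last first.
  have {h3} h3 : 3 * n <= i by rewrite leqNgt; apply/negbT.
  rewrite ebv_at //; lia.
have {h3} h3 : i < 3 * n := h3.
  have := divn_eq i 3; have := ltn_pmod i (isT : (0 < 3)%N).
  case: (i %% 3) => [|[|[|r]]] //= _ e; rewrite ?at_D !ebv_at //; try lia.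
Qed.

Lemma colM_od i j : (i < k)%N -> (j < n)%N ->
  at_ (colM n i) (2 * j).+1 = ((i == 3 * j + 1) + (i == 3 * j + 2))%N.
Proof.
move=> hi hj; rewrite /colM; case: ifP => h3; last first.
  have {h3} h3 : 3 * n <= i by rewrite leqNgt; apply/negbT.
  rewrite ebv_at //; lia.
have {h3} h3 : i < 3 * n := h3.
  have := divn_eq i 3; have := ltn_pmod i (isT : (0 < 3)%N).
  case: (i %% 3) => [|[|[|r]]] //= _ e; rewrite ?at_D !ebv_at //; try lia.
Qed.

Definition phi (m : mono) : 'X_{1..(2 * n).+1} :=
  (\big[+%MM/0%MM]_(i < k) (colM n i *+ m i))%MM.

Lemma phi_at (m : mono) l : (l < (2 * n).+1)%N ->
  at_ (phi m) l = (\sum_(i < k) (at_ (colM n i) l * m i))%N.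
Proof. by move=> hl; rewrite /at_ /phi mnm_sumE; apply: eq_bigr => i _; rewrite mulmnE. Qed.

Lemma sum_delta (f : 'I_k -> nat) p : (p < k)%N ->
  (\sum_(i < k) ((i == p :> nat) * f i))%N = f (inord p).
Proof.
move=> hp; rewrite (bigD1 (inord p)) //= inordK // eqxx mul1n big1 ?addn0 //.
move=> i hi; case: eqP => // e; move: hi; suff -> : i = inord p by rewrite eqxx.
by apply: val_inj; rewrite /= inordK.
Qed.

Lemma phi_ev (m : mono) j : (j < n)%N ->
  at_ (phi m) (2 * j) = (at_ m (3 * j) + at_ m (3 * j + 1))%N.
Proof.
move=> hj; rewrite phi_at; last lia.
under eq_bigr => i _ do rewrite colM_ev // mulnDl.
by rewrite big_split /= !sum_delta //; lia.
Qed.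

Lemma phi_od (m : mono) j : (j < n)%N ->
  at_ (phi m) (2 * j).+1 = (at_ m (3 * j + 1) + at_ m (3 * j + 2))%N.
Proof.
move=> hj; rewrite phi_at; last lia.
under eq_bigr => i _ do rewrite colM_od // mulnDl.
by rewrite big_split /= !sum_delta //; lia.
Qed.

Lemma phi_top (m : mono) : at_ (phi m) (2 * n) = mdeg m.
Proof.
rewrite phi_at // mdegE.
by apply: eq_bigr => i _; rewrite colM_top // mul1n.
Qed.

Lemma sum3 (f : nat -> nat) N :
  (\sum_(0 <= p < 3 * N) f p = \sum_(0 <= j < N) (f (3 * j) + f (3 * j + 1) + f (3 * j + 2)))%N.
Proof.
elim: N => [|N IH]; first by rewrite !big_geq.
rewrite [in RHS]big_nat_recr //= -IH.
have -> : (3 * N.+1 = (3 * N).+3)%N by lia.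
rewrite [in LHS]big_nat_recr //= [in LHS]big_nat_recr //= [in LHS]big_nat_recr //=.
by rewrite !addn1 !addn2 !addnA.
Qed.

Lemma mdeg_blocks (m : mono) : mdeg m =
  (\sum_(0 <= j < n) (at_ m (3 * j) + at_ m (3 * j + 1) + at_ m (3 * j + 2)) + at_ m (3 * n))%N.
Proof.
rewrite mdegE -sum3 -big_nat_recr //= big_mkord.
by apply: eq_bigr => i _; rewrite at_val.
Qed.

Lemma phiD (m1 m2 : mono) : phi (m1 + m2)%MM = (phi m1 + phi m2)%MM.
Proof.
apply/mnmP => t; rewrite mnmDE /phi !mnm_sumE -big_split /=.
by apply: eq_bigr => i _; rewrite !mulmnE mnmDE mulnDr.
Qed.

Lemma phiE p : (p < k)%N -> phi (E p) = colM n p.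
Proof.
move=> hp; apply/mnmP => t; rewrite /phi mnm_sumE.
under eq_bigr => i _ do rewrite mulmnE mnmE mulnC.
by rewrite sum_delta // inordK.
Qed.

Lemma phi0 : phi 0%MM = 0%MM.
Proof.
apply/mnmP => t; rewrite /phi mnm_sumE mnm0E big1 // => i _.
by rewrite mulmnE mnm0E muln0.
Qed.

Definition lstM (R : nzRingType) : (3 * n).+1.-tuple {mpoly R[(2 * n).+1]} :=
  [tuple 'X_[colM n i] | i < (3 * n).+1].

Lemma comp_X (R : nzRingType) (m : mono) : comp_mpoly (lstM R) 'X_[m] = 'X_[R, phi m].
Proof.
rewrite comp_mpolyX; under eq_bigr do rewrite tnth_mktuple.
by rewrite mprodXnE.
Qed.

End Toric.

Section Ideal.
Variable n : nat.
Local Notation k := (3 * n).+1.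
Local Notation mono := 'X_{1..k}.
Variable R : nzRingType.
Local Notation P := {mpoly R[k]}.
Definition tor (p : P) := comp_mpoly (lstM n R) p == 0%R.

Lemma toric_comp (p : P) :
  comp_mpoly (lstM n R) p = (\sum_(m <- msupp p) p@_m *: 'X_[phi m])%R.
Proof. by rewrite comp_mpolyEX; apply: eq_bigr => m _; rewrite comp_X. Qed.


Lemma fiber_sum (p : P) : tor p -> forall e,
  (\sum_(m <- msupp p) (if phi m == e then p@_m else (0 : R)))%R = (0 : R)%R.
Proof.
rewrite /tor => /eqP h e; have := congr1 (mcoeff e) h.
rewrite toric_comp mcoeff0 raddf_sum => H; rewrite -[RHS]H; apply: eq_bigr => m _.
rewrite /= mcoeffZ mcoeffX; case: eqP => _; by rewrite ?mulr1 ?mulr0.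
Qed.

Lemma binom_in (u w : mono) : phi u = phi w -> tor ('X_[u] - 'X_[w])%R.
Proof. by move=> e; rewrite /tor comp_mpolyB !comp_X e subrr. Qed.

Lemma other_in_fiber (p : P) m0 : tor p -> m0 \in msupp p ->
  exists m, [/\ m \in msupp p, m != m0 & phi m = phi m0].
Proof.
move=> hI hm0; apply: NNPP => H.
have := fiber_sum hI (phi m0).
rewrite (bigD1_seq m0) ?msupp_uniq //= eqxx big_seq_cond big1 ?addr0.
  by move/eqP; rewrite mcoeff_eq0 hm0.
move=> m /andP [hm ne]; case: eqP => // e; case: H; exists m; split=> //.
Qed.

Lemma lepm_anti (a b : mono) : (a <= b)%MM -> (b <= a)%MM -> a = b.
Proof.
move=> /mnm_lepP h1 /mnm_lepP h2; apply/mnmP => i.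
by apply/eqP; rewrite eqn_leq h1 h2.
Qed.

Lemma lepm_mdeg_eq (a b : mono) : (a <= b)%MM -> mdeg a = mdeg b -> a = b.
Proof.
move=> h e; have := submK h; move=> hb.
have : mdeg (b - a)%MM = 0 by move: (congr1 mdeg hb); rewrite mdegD e; lia.
by move/eqP; rewrite mdeg_eq0 => /eqP z; rewrite -hb z add0m.
Qed.

Lemma lepm_mdeg_lt (a b : mono) : (a <= b)%MM -> a != b -> mdeg a < mdeg b.
Proof.
move=> h ne; have := submK h => hb.
have : mdeg b = mdeg (b - a)%MM + mdeg a by rewrite -mdegD hb.
case: (eqVneq (mdeg (b - a)%MM) 0) => [/eqP|nz]; last by lia.
rewrite mdeg_eq0 => /eqP z; move: hb; rewrite z add0m => e; by rewrite e eqxx in ne.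
Qed.

Section Order.
Variable ord : monomial_order k.

Definition std (u : mono) := forall w, phi w = phi u -> ord u w.
Definition minNS (u : mono) := ~ std u /\ forall u', (u' <= u)%MM -> u' != u -> std u'.

Lemma ord_refl a : ord a a. Proof. exact: mo_refl. Qed.
Lemma ord_trans a b c : ord a b -> ord b c -> ord a c.
Proof. by move=> h1 h2; apply: (mo_trans h1 h2). Qed.
Lemma ord_anti a b : ord a b -> ord b a -> a = b.
Proof. by move=> h1 h2; apply: (@mo_antisym k ord a b); rewrite h1 h2. Qed.
Lemma ord_total a b : ord a b \/ ord b a.
Proof. by case/orP: (mo_total ord a b); auto. Qed.
Lemma ord_not a b : ~ ord a b -> ord b a /\ b != a.
Proof.
move=> h; case: (ord_total a b) => // h'; split=> //; apply/eqP => e.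
by apply: h; rewrite e ord_refl.
Qed.

Lemma ord_lepm (a b : mono) : (a <= b)%MM -> ord a b.
Proof.
move=> h; have := @mo_mul k ord 0%MM (b - a)%MM a (@mo_zero k ord (b - a)%MM).
by rewrite add0m submK.
Qed.

Lemma ord_addl (a b c : mono) : ord a b -> ord (c + a)%MM (c + b)%MM.
Proof. by move=> h; rewrite ![(c + _)%MM]addmC; apply: mo_mul. Qed.

Lemma ord_cancel (a b c : mono) : ord (a + c)%MM (b + c)%MM -> ord a b.
Proof.
move=> h; apply: NNPP => nab; have [hba ne] := ord_not nab.
have e := ord_anti h (@mo_mul k ord _ _ c hba).
by move/addIm: e => e; apply: nab; rewrite e ord_refl.
Qed.

Lemma NS_up (u' m : mono) : ~ std u' -> (u' <= m)%MM -> ~ std m.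
Proof.
move=> ns hle hs; apply: ns => w' e.
have := hs (w' + (m - u'))%MM.
rewrite !phiD e -phiD addmC submK // => /(_ erefl).
by rewrite -{1}(submK hle) addmC => /ord_cancel.
Qed.

Lemma exists_minNS (m : mono) : ~ std m -> exists u, (u <= m)%MM /\ minNS u.
Proof.
move: {2}(mdeg m) (leqnn (mdeg m)) => d; elim: d m => [|d IH] m hd ns.
  exists m; split; first exact: lepm_refl.
  split=> // u' hu' ne; have := lepm_mdeg_lt hu' ne; lia.
case: (classic (exists u', [/\ (u' <= m)%MM, u' != m & ~ std u'])).
  case=> u' [hu' ne ns']; have := lepm_mdeg_lt hu' ne => hlt.
  have [u [h1 h2]] := IH u' (ltac:(lia)) ns'.
  by exists u; split=> //; apply: lepm_trans h1 hu'.
move=> H; exists m; split; first exact: lepm_refl.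
split=> // u' hu' ne; apply: NNPP => ns'; apply: H; exists u'; split=> //.
Qed.

End Order.
End Ideal.

Lemma eq_at s (m1 m2 : 'X_{1..s.+1}) :
  (forall t, t < s.+1 -> at_ m1 t = at_ m2 t) -> m1 = m2.
Proof. by move=> h; apply/mnmP => i; rewrite -!at_val; apply: h. Qed.

Lemma le_at s (m1 m2 : 'X_{1..s.+1}) :
  (forall t, t < s.+1 -> at_ m1 t <= at_ m2 t) -> (m1 <= m2)%MM.
Proof. by move=> h; apply/mnm_lepP => i; rewrite -!at_val; apply: h. Qed.

Lemma sum_nat0 (f : nat -> nat) N : (forall j, j < N -> f j = 0) ->
  \sum_(0 <= j < N) f j = 0.
Proof.
move=> h; rewrite big_nat_cond; apply: big1 => j /andP [/andP [_ hj] _]; exact: h.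
Qed.

Lemma sum_ge (f : nat -> nat) N j : j < N -> f j <= \sum_(0 <= i < N) f i.
Proof.
elim: N => [|N IH] hj //; rewrite big_nat_recr //=.
case: (ltnP j N) => h; first by have := IH h; lia.
have -> : j = N by lia.
lia.
Qed.

Section Comb.
Variable n : nat.
Local Notation k := (3 * n).+1.
Local Notation mono := 'X_{1..k}.

Lemma decomp t : t < k -> t = 3 * n \/ exists j r, [/\ j < n, r < 3 & t = 3 * j + r].
Proof.
move=> ht; case: (eqVneq t (3 * n)) => [|ne]; first by left.
right; exists (t %/ 3), (t %% 3); have := divn_eq t 3; have := ltn_pmod t (isT : 0 < 3).
move=> h1 h2; split=> //; lia.
Qed.

Lemma eq_mono (m1 m2 : mono) :
  (forall j, j < n -> [/\ at_ m1 (3 * j) = at_ m2 (3 * j),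
     at_ m1 (3 * j + 1) = at_ m2 (3 * j + 1) & at_ m1 (3 * j + 2) = at_ m2 (3 * j + 2)]) ->
  at_ m1 (3 * n) = at_ m2 (3 * n) -> m1 = m2.
Proof.
move=> hb hz; apply: eq_at => t ht.
case: (decomp ht) => [->//|[j [r [hj hr ->]]]].
have [h0 h1 h2] := hb j hj.
by case: r hr => [|[|[|r]]] // _; rewrite ?addn0.
Qed.

Lemma E_U p : p < k -> E n p = U_(inord p)%MM.
Proof.
move=> hp; apply/mnmP => i; rewrite mnmE mnm1E.
by rewrite -(inj_eq val_inj) /= inordK // eq_sym.
Qed.

Lemma mdegE1 p : p < k -> mdeg (E n p) = 1.
Proof. by move=> hp; rewrite E_U // mdeg1. Qed.

Lemma fib (u w : mono) : phi u = phi w ->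
  (forall j, j < n -> at_ u (3 * j) + at_ u (3 * j + 1) = at_ w (3 * j) + at_ w (3 * j + 1)
     /\ at_ u (3 * j + 1) + at_ u (3 * j + 2) = at_ w (3 * j + 1) + at_ w (3 * j + 2))
  /\ mdeg u = mdeg w.
Proof.
move=> e; split; last by rewrite -!phi_top e.
move=> j hj; split.
  by rewrite -!phi_ev // e.
by rewrite -!phi_od // e.
Qed.

Lemma fib_conv (u w : mono) :
  (forall j, j < n -> at_ u (3 * j) + at_ u (3 * j + 1) = at_ w (3 * j) + at_ w (3 * j + 1)
     /\ at_ u (3 * j + 1) + at_ u (3 * j + 2) = at_ w (3 * j + 1) + at_ w (3 * j + 2)) ->
  mdeg u = mdeg w -> phi u = phi w.
Proof.
move=> hb hd; apply: eq_at => t ht.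
case: (eqVneq t (2 * n)) => [->|ne]; first by rewrite !phi_top.
have h1 := divn_eq t 2; have h2 := ltn_pmod t (isT : 0 < 2).
have hj : t %/ 2 < n by lia.
have [X Y] := hb _ hj.
move: h1 h2; case: (t %% 2) => [|[|r]] // e _.
  have -> : t = 2 * (t %/ 2) by lia.
  by rewrite !phi_ev.
have -> : t = (2 * (t %/ 2)).+1 by lia.
by rewrite !phi_od.
Qed.

Definition SA j : mono := (E n (3 * j) + E n (3 * j + 2))%MM.
Definition SB j : mono := (E n (3 * j + 1) + E n (3 * n))%MM.
Definition TA i j : mono := (E n (3 * i) + E n (3 * i + 2) + E n (3 * j + 1))%MM.

Lemma mdeg_SA j : j < n -> mdeg (SA j) = 2.
Proof. by move=> hj; rewrite mdegD !mdegE1 //; lia. Qed.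
Lemma mdeg_SB j : j < n -> mdeg (SB j) = 2.
Proof. by move=> hj; rewrite mdegD !mdegE1 //; lia. Qed.
Lemma mdeg_TA i j : i < n -> j < n -> mdeg (TA i j) = 3.
Proof. by move=> hi hj; rewrite !mdegD !mdegE1 //; lia. Qed.

Lemma colM_a j : j < n -> colM n (3 * j) = (ebv n (2 * j) + ebv n (2 * n))%MM.
Proof.
move=> hj; rewrite /colM (_ : ltn (3 * j) (3 * n) = true); last by apply/idP; change (3 * j < 3 * n); lia.
by rewrite modnMr mulKn.
Qed.
Lemma colM_b j : j < n -> colM n (3 * j + 1) = (ebv n (2 * j) + ebv n (2 * j).+1 + ebv n (2 * n))%MM.
Proof.
move=> hj; rewrite /colM (_ : ltn (3 * j + 1) (3 * n) = true); last by apply/idP; change (3 * j + 1 < 3 * n); lia.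
by rewrite [3 * j]mulnC modnMDl divnMDl // addn0.
Qed.
Lemma colM_c j : j < n -> colM n (3 * j + 2) = (ebv n (2 * j).+1 + ebv n (2 * n))%MM.
Proof.
move=> hj; rewrite /colM (_ : ltn (3 * j + 2) (3 * n) = true); last by apply/idP; change (3 * j + 2 < 3 * n); lia.
by rewrite [3 * j]mulnC modnMDl divnMDl // addn0.
Qed.
Lemma colM_z : colM n (3 * n) = ebv n (2 * n).
Proof. by rewrite /colM (_ : ltn (3 * n) (3 * n) = false) //; apply/negbTE; change (~~ (3 * n < 3 * n)); rewrite ltnn. Qed.

Lemma phi_S j : j < n -> phi (SA j) = phi (SB j).
Proof.
move=> hj; rewrite /SA /SB !phiD !phiE; try lia.
rewrite colM_a // colM_b // colM_c // colM_z.
by apply/mnmP => t; rewrite !mnmDE; lia.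
Qed.

Lemma phi_T i j : i < n -> j < n -> phi (TA i j) = phi (TA j i).
Proof.
move=> hi hj; rewrite /TA !phiD !phiE; try lia.
rewrite !colM_a // !colM_b // !colM_c //.
by apply/mnmP => t; rewrite !mnmDE; lia.
Qed.

Section WithOrd.
Variable ord : monomial_order k.

Lemma split_lem (u w u1 w1 : mono) : minNS ord u -> phi w = phi u -> ~ ord u w ->
  (u1 <= u)%MM -> (w1 <= w)%MM -> phi u1 = phi w1 -> u1 != 0%MM -> u = u1 /\ w = w1.
Proof.
move=> [ns hmin] e nuw hu1 hw1 e1 nz.
case: (eqVneq u1 u) => [eu|neu].
  split=> //; apply/esym/lepm_mdeg_eq => //.
  by rewrite -!phi_top -e1 eu e.
exfalso; apply: nuw.
set u2 := (u - u1)%MM; set w2 := (w - w1)%MM.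
have Hu : u = (u2 + u1)%MM by rewrite submK.
have Hw : w = (w2 + w1)%MM by rewrite submK.
have e2 : phi u2 = phi w2.
  by apply: (@addIm _ (phi u1)); rewrite [in RHS]e1 -!phiD -Hu -Hw e.
have s1 : ord u1 w1 by apply: (hmin u1 hu1 neu).
have s2 : ord u2 w2.
  apply: (hmin u2); first exact: lem_subr.
  apply/eqP => e3; move/eqP: nz; apply; apply: (@addmI _ u2).
  by rewrite addm0 -Hu e3.
  by rewrite e2.
rewrite Hu Hw; apply: (ord_trans (b := (u2 + w1)%MM)).
  exact: ord_addl.
exact: mo_mul.
Qed.

Lemma disj (u w : mono) : minNS ord u -> phi w = phi u -> ~ ord u w ->
  forall t, t < k -> at_ u t = 0 \/ at_ w t = 0.
Proof.
move=> hm e nuw t ht; apply: NNPP => H.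
have hu : 0 < at_ u t by lia.
have hw : 0 < at_ w t by lia.
have le1 : forall m : mono, 0 < at_ m t -> (E n t <= m)%MM.
  move=> m hm'; apply: le_at => t' ht'; rewrite E_at //.
  by case: (eqVneq t' t) => [->|]; lia.
have [eu ew] := split_lem hm e nuw (le1 _ hu) (le1 _ hw) erefl
  (ltac:(by rewrite -mdeg_eq0 mdegE1)).
by apply: nuw; rewrite eu ew; apply: ord_refl.
Qed.

Lemma blockfacts (u w : mono) : minNS ord u -> phi w = phi u -> ~ ord u w ->
  forall j, j < n ->
  [/\ at_ u (3 * j) + at_ u (3 * j + 1) = at_ w (3 * j) + at_ w (3 * j + 1),
      at_ u (3 * j + 1) + at_ u (3 * j + 2) = at_ w (3 * j + 1) + at_ w (3 * j + 2),
      at_ u (3 * j) = 0 \/ at_ w (3 * j) = 0,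
      at_ u (3 * j + 1) = 0 \/ at_ w (3 * j + 1) = 0 &
      at_ u (3 * j + 2) = 0 \/ at_ w (3 * j + 2) = 0].
Proof.
move=> hm e nuw j hj; have [F _] := fib (esym e); have [X Y] := F j hj.
split=> //; apply: (disj hm e nuw); lia.
Qed.

Lemma Bsum (u w : mono) : phi u = phi w ->
  \sum_(0 <= j < n) at_ u (3 * j + 1) + at_ w (3 * n) =
  \sum_(0 <= j < n) at_ w (3 * j + 1) + at_ u (3 * n).
Proof.
move=> e; have [F md] := fib e.
have := md; rewrite !mdeg_blocks => md'.
have : \sum_(0 <= j < n) (at_ u (3 * j) + at_ u (3 * j + 1) + at_ u (3 * j + 2))
     + \sum_(0 <= j < n) at_ u (3 * j + 1) =
       \sum_(0 <= j < n) (at_ w (3 * j) + at_ w (3 * j + 1) + at_ w (3 * j + 2))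
     + \sum_(0 <= j < n) at_ w (3 * j + 1).
  rewrite -!big_split /=; apply: eq_big_nat => j /andP [_ hj].
  by have [X Y] := F j hj; lia.
lia.
Qed.

End WithOrd.
End Comb.

Section SecD.
Variable n : nat.
Local Notation k := (3 * n).+1.
Local Notation mono := 'X_{1..k}.

Lemma le_SA (m : mono) j : j < n -> 0 < at_ m (3 * j) -> 0 < at_ m (3 * j + 2) ->
  (SA n j <= m)%MM.
Proof.
move=> hj h1 h2; apply: le_at => t ht; rewrite /SA !at_D !E_at //.
case: (eqVneq t (3 * j)) => [->|?]; first lia.
case: (eqVneq t (3 * j + 2)) => [->|?]; lia.
Qed.

Lemma le_SB (m : mono) j : j < n -> 0 < at_ m (3 * j + 1) -> 0 < at_ m (3 * n) ->
  (SB n j <= m)%MM.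
Proof.
move=> hj h1 h2; apply: le_at => t ht; rewrite /SB !at_D !E_at //.
case: (eqVneq t (3 * j + 1)) => [->|?]; first lia.
case: (eqVneq t (3 * n)) => [->|?]; lia.
Qed.

Lemma le_TA (m : mono) i j : i < n -> j < n -> i != j ->
  0 < at_ m (3 * i) -> 0 < at_ m (3 * i + 2) -> 0 < at_ m (3 * j + 1) ->
  (TA n i j <= m)%MM.
Proof.
move=> hi hj ne h1 h2 h3; apply: le_at => t ht; rewrite /TA !at_D !E_at //.
case: (eqVneq t (3 * i)) => [->|?]; first lia.
case: (eqVneq t (3 * i + 2)) => [->|?]; first lia.
case: (eqVneq t (3 * j + 1)) => [->|?]; lia.
Qed.

Lemma nz_deg (m : mono) : 0 < mdeg m -> m != 0%MM.
Proof. by move=> h; rewrite -mdeg_eq0 -lt0n. Qed.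

Variable ord : monomial_order k.

Lemma comb (u w : mono) : minNS ord u -> phi w = phi u -> ~ ord u w ->
 (exists j, j < n /\ ((u = SA n j /\ w = SB n j) \/ (u = SB n j /\ w = SA n j))) \/
 (exists i j, [/\ i < j, j < n &
    ((u = TA n i j /\ w = TA n j i) \/ (u = TA n j i /\ w = TA n i j))]).
Proof.
move=> hm e nuw.
have BF := blockfacts hm e nuw.
have Dz : at_ u (3 * n) = 0 \/ at_ w (3 * n) = 0 by apply: (disj hm e nuw).
have BS := Bsum (esym e).
case: (classic (exists j, [/\ j < n, 0 < at_ u (3 * j + 1) & 0 < at_ u (3 * n)]))
  => [[j [hj h1 h2]]|N1].
  have [X Y Da Db Dc] := BF j hj.
  have [eu ew] := split_lem hm e nuw (le_SB hj h1 h2)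
    (le_SA (m := w) hj (ltac:(lia)) (ltac:(lia))) (esym (phi_S hj))
    (nz_deg (m := SB n j) (ltac:(by rewrite mdeg_SB))).
  by left; exists j; split=> //; right.
case: (classic (exists j, [/\ j < n, 0 < at_ w (3 * j + 1) & 0 < at_ w (3 * n)]))
  => [[j [hj h1 h2]]|N2].
  have [X Y Da Db Dc] := BF j hj.
  have [eu ew] := split_lem hm e nuw
    (le_SA (m := u) hj (ltac:(lia)) (ltac:(lia))) (le_SB hj h1 h2) (phi_S hj)
    (nz_deg (m := SA n j) (ltac:(by rewrite mdeg_SA))).
  by left; exists j; split=> //; left.
case: (classic (exists i j, [/\ i < n, j < n, 0 < at_ u (3 * j + 1) & 0 < at_ u (3 * i)]))
  => [[i [j [hi hj h1 h2]]]|N3].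
  have [Xi Yi Dai Dbi Dci] := BF i hi.
  have [Xj Yj Daj Dbj Dcj] := BF j hj.
  have ne : i != j by apply/eqP => eij; subst i; lia.
  have [eu ew] := split_lem hm e nuw
    (le_TA (m := u) hi hj ne h2 (ltac:(lia)) h1)
    (le_TA (m := w) hj hi (ltac:(by rewrite eq_sym)) (ltac:(lia)) (ltac:(lia)) (ltac:(lia)))
    (phi_T hi hj) (nz_deg (m := TA n i j) (ltac:(by rewrite mdeg_TA))).
  right; case: (ltnP i j) => hij.
    by exists i, j; split=> //; left.
  have hji : j < i by rewrite ltn_neqAle eq_sym ne hij.
  by exists j, i; split=> //; right.
have hub : forall j, j < n -> at_ u (3 * j + 1) = 0.
  move=> j hj; apply: NNPP => hne.
  have huz : at_ u (3 * n) = 0.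
    apply: NNPP => h; apply: N1; exists j; split=> //; lia.
  have hua : forall i, i < n -> at_ u (3 * i) = 0.
    move=> i hi; apply: NNPP => h; apply: N3; exists i, j; split=> //; lia.
  have hwb : forall i, i < n -> at_ w (3 * i + 1) = 0.
    move=> i hi; have [X Y Da Db Dc] := BF i hi; have := hua i hi; lia.
  have := sum_nat0 hwb; have := sum_ge (fun j => at_ u (3 * j + 1)) hj; lia.
have hwb : forall j, j < n -> at_ w (3 * j + 1) = 0.
  move=> j hj; apply: NNPP => hne.
  have hwz : at_ w (3 * n) = 0.
    apply: NNPP => h; apply: N2; exists j; split=> //; lia.
  have := sum_nat0 hub; have := sum_ge (fun j => at_ w (3 * j + 1)) hj; lia.
have hz : at_ u (3 * n) = at_ w (3 * n).
  by have := sum_nat0 hub; have := sum_nat0 hwb; lia.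
exfalso; apply: nuw.
have -> : u = w; last exact: ord_refl.
apply: eq_mono => // j hj; have [X Y Da Db Dc] := BF j hj.
have := hub j hj; have := hwb j hj; split; lia.
Qed.

End SecD.

Section SecE.
Variable n : nat.
Local Notation k := (3 * n).+1.
Local Notation mono := 'X_{1..k}.
Local Notation P := {mpoly C[k]}.

Lemma toric_tor (p : P) : toric_ideal n p = tor p.
Proof. by []. Qed.

Lemma tvE p : 0 < p -> p <= k -> tv n p = 'X_[E n p.-1].
Proof. by move=> h1 h2; rewrite /tv E_U //; lia. Qed.

Lemma Vp_X j : j < n -> Vp n j = ('X_[SA n j] - 'X_[SB n j])%R.
Proof.
move=> hj; rewrite /Vp /SA /SB !tvE; try lia.
have -> : (3 * j + 1).-1 = 3 * j by lia.
have -> : (3 * j + 3).-1 = 3 * j + 2 by lia.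
have -> : (3 * j + 2).-1 = 3 * j + 1 by lia.
have -> : (3 * n + 1).-1 = 3 * n by lia.
by rewrite !mpolyXD.
Qed.

Lemma Vpp_X i j : i < n -> j < n -> Vpp n i j = ('X_[TA n i j] - 'X_[TA n j i])%R.
Proof.
move=> hi hj; rewrite /Vpp /TA !tvE; try lia.
have -> : (3 * j + 1).-1 = 3 * j by lia.
have -> : (3 * j + 3).-1 = 3 * j + 2 by lia.
have -> : (3 * j + 2).-1 = 3 * j + 1 by lia.
have -> : (3 * i + 1).-1 = 3 * i by lia.
have -> : (3 * i + 3).-1 = 3 * i + 2 by lia.
have -> : (3 * i + 2).-1 = 3 * i + 1 by lia.
by rewrite !mpolyXD.
Qed.

Lemma shape_poly (u w : mono) :
 (exists j, j < n /\ ((u = SA n j /\ w = SB n j) \/ (u = SB n j /\ w = SA n j))) \/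
 (exists i j, [/\ i < j, j < n &
    ((u = TA n i j /\ w = TA n j i) \/ (u = TA n j i /\ w = TA n i j))]) ->
 exists2 v, inV n v & (('X_[u] - 'X_[w] : P)%R = v \/ ('X_[u] - 'X_[w] : P)%R = (- v)%R).
Proof.
case=> [[j [hj [[-> ->]|[-> ->]]]]|[i [j [hij hj [[-> ->]|[-> ->]]]]]].
- by exists (Vp n j); [left; exists j | left; rewrite Vp_X].
- by exists (Vp n j); [left; exists j | right; rewrite Vp_X // opprB].
- exists (Vpp n i j); [right; exists i, j; split=> //; lia | left; rewrite Vpp_X //; lia].
- exists (Vpp n i j); [right; exists i, j; split=> //; lia | right; rewrite Vpp_X ?opprB //; lia].
Qed.

Definition LV : seq P :=
  [seq Vp n j | j <- iota 0 n] ++ [seq (- Vp n j)%R | j <- iota 0 n] ++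
  [seq Vpp n i j | i <- iota 0 n, j <- iota 0 n] ++
  [seq (- Vpp n i j)%R | i <- iota 0 n, j <- iota 0 n].

Lemma inV_L v : inV n v -> v \in LV /\ (- v)%R \in LV.
Proof.
case=> [[j hj ->]|[i [j [hij ->]]]].
  have hj' : j \in iota 0 n by rewrite mem_iota; lia.
  by rewrite /LV !mem_cat !(map_f (fun j => Vp n j)) ?(map_f (fun j => (- Vp n j)%R)) ?orbT.
have hi' : i \in iota 0 n by rewrite mem_iota; lia.
have hj' : j \in iota 0 n by rewrite mem_iota; lia.
rewrite /LV !mem_cat (allpairs_f (fun i j => Vpp n i j)) //.
by rewrite (allpairs_f (fun i j => (- Vpp n i j)%R)) // !orbT.
Qed.

Lemma filter_ex (T : eqType) (Q : T -> Prop) (s : seq T) :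
  exists G : seq T, forall x, x \in G <-> (x \in s /\ Q x).
Proof.
elim: s => [|a s [G hG]]; first by exists [::]; move=> x; split=> // [[]].
case: (classic (Q a)) => hQ.
  exists (a :: G) => x; rewrite !in_cons; split.
    by case/orP=> [/eqP ->|/hG [h1 h2]]; [rewrite eqxx | rewrite h1 orbT].
  case=> /orP [/eqP ->|h1] h2; first by rewrite eqxx.
  by apply/orP; right; apply/hG.
exists G => x; rewrite in_cons; split.
  by move/hG => [h1 h2]; rewrite h1 orbT.
case=> /orP [/eqP ->|h1] h2; first by [].
by apply/hG.
Qed.

Section Ord.
Variable ord : monomial_order k.

Lemma partner_uniq (u w1 w2 : mono) : minNS ord u ->
  phi w1 = phi u -> ~ ord u w1 -> phi w2 = phi u -> ~ ord u w2 -> w1 = w2.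
Proof.
move=> hm e1 n1 e2 n2.
have B1 := blockfacts hm e1 n1; have B2 := blockfacts hm e2 n2.
have [_ d1] := fib e1; have [_ d2] := fib e2.
have hb : forall j, j < n -> [/\ at_ w1 (3 * j) = at_ w2 (3 * j),
     at_ w1 (3 * j + 1) = at_ w2 (3 * j + 1) & at_ w1 (3 * j + 2) = at_ w2 (3 * j + 2)].
  move=> j hj; have [X1 Y1 A1 Bb1 C1] := B1 j hj; have [X2 Y2 A2 Bb2 C2] := B2 j hj.
  split; lia.
apply: eq_mono => //.
have := d1; rewrite -d2 !mdeg_blocks.
have -> : \sum_(0 <= j < n) (at_ w1 (3 * j) + at_ w1 (3 * j + 1) + at_ w1 (3 * j + 2)) =
          \sum_(0 <= j < n) (at_ w2 (3 * j) + at_ w2 (3 * j + 1) + at_ w2 (3 * j + 2)).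
  by apply: eq_big_nat => j /andP [_ hj]; have [-> -> ->] := hb j hj.
lia.
Qed.

Lemma std_partner (u w : mono) : minNS ord u -> phi w = phi u -> ~ ord u w -> std ord w.
Proof.
move=> hm e nuw w'' e''; apply: NNPP => nw.
have [hw''w ne] := ord_not nw.
have [hwu _] := ord_not nuw.
have nuw'' : ~ ord u w'' by move=> h; apply: nuw; apply: ord_trans h hw''w.
have := partner_uniq hm (etrans e'' e) nuw'' e nuw.
by move=> eq; move: ne; rewrite eq eqxx.
Qed.

Lemma lead_uniq (p : P) m1 m2 : lead_mon ord p m1 -> lead_mon ord p m2 -> m1 = m2.
Proof. by move=> [h1 h1'] [h2 h2']; apply: ord_anti; [apply: h2' | apply: h1']. Qed.

Lemma coef_bin (u w m : mono) :
  (('X_[u] - 'X_[w] : P)@_m = (u == m)%:R - (w == m)%:R)%R.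
Proof. by rewrite mcoeffB !mcoeffX. Qed.

Lemma supp_bin (u w m : mono) : m \in msupp ('X_[u] - 'X_[w] : P)%R -> m = u \/ m = w.
Proof.
move=> hm; have : (('X_[u] - 'X_[w] : P)@_m != 0)%R by rewrite mcoeff_eq0 negbK.
rewrite coef_bin; case E1: (u == m); first by move/eqP: E1 => ->; left.
case E2: (w == m); first by move/eqP: E2 => ->; right.
by rewrite subrr eqxx.
Qed.

Lemma lead_bin (u w : mono) : ~ ord u w ->
  lead_mon ord ('X_[u] - 'X_[w] : P)%R u /\ (('X_[u] - 'X_[w] : P)@_u = 1)%R.
Proof.
move=> nuw; have [hwu ne] := ord_not nuw.
have c1 : (('X_[u] - 'X_[w] : P)@_u = 1)%R.
  by rewrite coef_bin eqxx (negbTE ne) subr0.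
split=> //; split.
  by rewrite -[_ \in _]negbK -mcoeff_eq0 c1 oner_neq0.
by move=> m' /supp_bin [->|->]; [apply: ord_refl | exact: hwu].
Qed.

Lemma max_seq (s : seq mono) : s != [::] ->
  exists m, m \in s /\ forall m', m' \in s -> ord m' m.
Proof.
elim: s => [//|a s IH] _; case: (eqVneq s [::]) => [->|ns].
  by exists a; split; rewrite ?mem_head // => m'; rewrite inE => /eqP ->; apply: ord_refl.
have [m [hm hm']] := IH ns.
case: (ord_total ord a m) => h.
  exists m; split; first by rewrite inE hm orbT.
  by move=> m'; rewrite inE => /orP [/eqP ->|/hm'].
exists a; split; first exact: mem_head.
by move=> m'; rewrite inE => /orP [/eqP ->|/hm' h']; [apply: ord_refl | apply: ord_trans h' h].
Qed.

Lemma lead_exists (p : P) : p != 0%R -> exists m, lead_mon ord p m.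
Proof. by rewrite -msupp_eq0 => /max_seq [m [h1 h2]]; exists m. Qed.

End Ord.
End SecE.

Section SecF.
Variable n : nat.
Local Notation k := (3 * n).+1.
Local Notation mono := 'X_{1..k}.
Local Notation P := {mpoly C[k]}.

Definition PB (ord : monomial_order k) (x : P) := exists u w,
  [/\ x = ('X_[u] - 'X_[w])%R, minNS ord u, phi w = phi u & ~ ord u w].

Lemma NS_wit ord (u : mono) : ~ std ord u -> exists w, phi w = phi u /\ ~ ord u w.
Proof.
move=> ns; apply: NNPP => H; apply: ns => w e; apply: NNPP => h; apply: H.
by exists w; split.
Qed.

Lemma PB_L ord x : PB ord x -> x \in LV n.
Proof.
case=> u [w [-> hm e nuw]].
have [v hv [->|->]] := shape_poly (comb hm e nuw); by have [] := inV_L hv.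
Qed.

Lemma GB_reduced ord G : (forall x, x \in G <-> (x \in LV n /\ PB ord x)) ->
  is_reduced_GB ord (toric_ideal n) G.
Proof.
move=> hG; split.
- move=> g /hG [_ [u [w [-> _ e _]]]].
  by rewrite toric_tor; apply: binom_in; rewrite e.
- move=> g /hG [_ [u [w [-> _ _ nuw]]]]; have [h1 h2] := lead_bin nuw.
  by exists u.
- move=> f hf nz.
  have [mf hmf] := lead_exists ord nz.
  have hf' : tor f by rewrite -toric_tor.
  have [m [hm ne e]] := other_in_fiber hf' hmf.1.
  have hle := hmf.2 m hm.
  have ns : ~ std ord mf.
    by move=> hs; have := ord_anti hle (hs m e) => em; move: ne; rewrite em eqxx.
  have [u [hu hmu]] := exists_minNS ns.
  have [w [ew nuw]] := NS_wit hmu.1.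
  have hPB : PB ord ('X_[u] - 'X_[w])%R by exists u, w; split.
  exists ('X_[u] - 'X_[w])%R; split.
    by apply/hG; split=> //; apply: PB_L hPB.
  by exists u, mf; split=> //; have [] := lead_bin (ord := ord) nuw.
- move=> g g' /hG [_ [u [w [-> hm e nuw]]]] /hG [_ [u' [w' [-> hm' e' nuw']]]] ne mg' hl m hms.
  have emg : mg' = u' := lead_uniq hl (lead_bin nuw').1.
  subst mg'; apply/negP => hle.
  case: (supp_bin hms) => em; subst m.
    case: (eqVneq u' u) => [eu|neu].
      subst u'; have ew := partner_uniq hm e' nuw' e nuw.
      by move: ne; rewrite ew eqxx.
    by apply: hm'.1; apply: hm.2.
  by apply: (NS_up hm'.1 hle); apply: std_partner hm e nuw.
Qed.

Lemma GB_exists ord : exists G, is_reduced_GB ord (toric_ideal n) G /\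
  forall x, x \in G <-> (x \in LV n /\ PB ord x).
Proof.
have [G hG] := filter_ex (PB ord) (LV n).
by exists G; split=> //; apply: GB_reduced.
Qed.

Lemma part1 ord G g : is_reduced_GB ord (toric_ideal n) G -> g \in G -> PB ord g.
Proof.
move=> [h1 h2 h3 h4] hg.
have [mg hl hc] := h2 g hg.
have NSlead : forall m', ~ std ord m' ->
    exists g', g' \in G /\ exists2 mg', lead_mon ord g' mg' & (mg' <= m')%MM.
  move=> m' ns; have [w' [e' nw']] := NS_wit ns.
  have hf : toric_ideal n ('X_[m'] - 'X_[w'] : P)%R.
    by rewrite toric_tor; apply: binom_in; rewrite e'.
  have [hl' hc'] := lead_bin (ord := ord) nw'.
  have nz : ('X_[m'] - 'X_[w'] : P)%R != 0%R.
    by apply/eqP => h0; move: hc'; rewrite h0 mcoeff0 => /eqP; rewrite eq_sym oner_eq0.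
  have [g' [hg' [mg' [mf [hlg' hlf hle]]]]] := h3 _ hf nz.
  exists g'; split=> //; exists mg' => //.
  by rewrite -(lead_uniq hlf hl').
have gI : tor g by rewrite -toric_tor; apply: h1.
have [w0 [hw0 ne0 e0]] := other_in_fiber gI hl.1.
have o0 := hl.2 w0 hw0.
have nmw : ~ ord mg w0.
  by move=> h; move: ne0; rewrite (ord_anti o0 h) eqxx.
have std_others : forall m, m \in msupp g -> m != mg -> std ord m.
  move=> m hm nem; apply: NNPP => ns; have [g' [hg' [mg' hl' hle]]] := NSlead m ns.
  case: (eqVneq g' g) => [eg|neg].
    subst g'; have emg := lead_uniq hl' hl; subst mg'.
    have := ord_anti (hl.2 m hm) (ord_lepm ord hle) => em.
    by move: nem; rewrite em eqxx.
  by have := h4 g g' hg hg' neg mg' hl' m hm; rewrite hle.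
have hmin : minNS ord mg.
  split.
    by move=> hs; apply: nmw; apply: hs; rewrite e0.
  move=> u' hu' neu; apply: NNPP => ns; have [g' [hg' [mg'' hl' hle]]] := NSlead u' ns.
  case: (eqVneq g' g) => [eg|neg].
    subst g'; have emg := lead_uniq hl' hl; subst mg''.
    by move: neu; rewrite (lepm_anti hu' hle) eqxx.
  have hh : (mg'' <= mg)%MM by apply: lepm_trans hle hu'.
  by have := h4 g g' hg hg' neg mg'' hl' mg hl.1; rewrite hh.
have supp : forall m, m \in msupp g -> m = mg \/ m = w0.
  move=> m hm; case: (eqVneq m mg) => [->|nem]; first by left.
  right; have sm := std_others m hm nem.
  have [m2 [hm2 ne2 e2]] := other_in_fiber gI hm.
  case: (eqVneq m2 mg) => [em2|nem2].
    subst m2; have sw0 := std_others w0 hw0 ne0.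
    apply: ord_anti; first by apply: sm; rewrite e0.
    by apply: sw0; rewrite e0.
  have s2 := std_others m2 hm2 nem2.
  have := ord_anti (s2 m (esym e2)) (sm m2 e2) => em.
  by move: ne2; rewrite em eqxx.
have perm : perm_eq (msupp g) [:: mg; w0].
  apply: uniq_perm; [exact: msupp_uniq | by rewrite /= inE eq_sym ne0 | move=> x].
  rewrite !inE; apply/idP/idP.
    by move/supp => [->|->]; rewrite eqxx ?orbT.
  by case/orP => /eqP ->; [exact: hl.1 | exact: hw0].
have fs := fiber_sum gI (phi mg).
rewrite (perm_big _ perm) /= !big_cons big_nil eqxx e0 eqxx addr0 hc in fs.
have cw : (g@_w0 = - 1)%R.
  by apply/eqP; rewrite -addr_eq0 addrC fs.
have eg : g = ('X_[mg] - 'X_[w0])%R.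
  rewrite {1}(mpolyE g) (perm_big _ perm) /= !big_cons big_nil hc cw.
  by rewrite scale1r scaleN1r addr0.
by exists mg, w0; split.
Qed.

End SecF.

From mathcomp Require Import all_order.

Section SecG.
Variable n : nat.
Local Notation k := (3 * n).+1.
Local Notation mono := 'X_{1..k}.
Local Notation P := {mpoly C[k]}.

Definition wt (q : nat) (m : mono) := 2 * at_ m (3 * n) + at_ m q.

Lemma wtD q (a b : mono) : wt q (a + b)%MM = wt q a + wt q b.
Proof. by rewrite /wt !at_D; lia. Qed.

Lemma wt0 q : wt q 0%MM = 0.
Proof. by rewrite /wt /at_ !mnm0E. Qed.

Definition ordW_le (q : nat) (a b : mono) :=
  (wt q a < wt q b) || ((wt q a == wt q b) && (a <= b)%O).

Definition ordW (q : nat) : monomial_order k.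
Proof.
refine (@MonomialOrder k (ordW_le q) _ _ _ _ _ _).
- by move=> a; rewrite /ordW_le eqxx Order.POrderTheory.lexx orbT.
- move=> a b /andP []; rewrite /ordW_le; case: ltngtP => //= _ h1 h2.
  exact: Order.POrderTheory.le_anti (introT andP (conj h1 h2)).
- move=> b a c; rewrite /ordW_le.
  move=> /orP [h1|/andP [/eqP e1 h1]] /orP [h2|/andP [/eqP e2 h2]]; apply/orP.
  + by left; lia.
  + by left; lia.
  + by left; lia.
  + by right; rewrite e1 e2 eqxx (Order.POrderTheory.le_trans h1 h2).
- move=> a b; rewrite /ordW_le; case: ltngtP => //= _.
  exact: Order.TotalTheory.le_total.
- by move=> a b c; rewrite /ordW_le !wtD ltn_add2r eqn_add2r lemc_add2l.
- move=> a; rewrite /ordW_le wt0; case: (posnP (wt q a)) => [->|h].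
    by rewrite eqxx le0m orbT.
  by apply/orP; left.
Defined.

Lemma ordW_lt q a b : wt q a < wt q b -> ordW q a b.
Proof. by move=> h; rewrite /= /ordW_le h. Qed.

Lemma ordW_nle q a b : wt q b < wt q a -> ~ ordW q a b.
Proof. by move=> h; rewrite /= /ordW_le; case: ltngtP h. Qed.

Lemma mdeg_le (a b : mono) : (a <= b)%MM -> mdeg a <= mdeg b.
Proof. by move=> h; rewrite -(submK h) mdegD; lia. Qed.

Lemma at_le (a b : mono) t : (a <= b)%MM -> at_ a t <= at_ b t.
Proof. by move/mnm_lepP => h; apply: h. Qed.

Lemma small_std (ord : monomial_order k) (u' : mono) : mdeg u' < 2 -> std ord u'.
Proof.
move=> hd; apply: NNPP => ns; have [u [hu hm]] := exists_minNS ns.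
have [w [e nuw]] := NS_wit hm.1.
have := mdeg_le hu.
case: (comb hm e nuw) => [[j [hj [[eu _]|[eu _]]]]|[i [j [hij hj [[eu _]|[eu _]]]]]]; subst u.
- by rewrite mdeg_SA //; lia.
- by rewrite mdeg_SB //; lia.
- by rewrite mdeg_TA //; lia.
- by rewrite mdeg_TA //; lia.
Qed.

Lemma minNS2 (ord : monomial_order k) (u w : mono) : mdeg u = 2 -> phi w = phi u -> ~ ord u w -> minNS ord u.
Proof.
move=> hd e nuw; split; first by move=> hs; apply: nuw; apply: hs.
move=> u' hu' ne; apply: small_std; have := lepm_mdeg_lt hu' ne; lia.
Qed.

Lemma inUGB_of (ord : monomial_order k) (x : P) : inV n x \/ inV n (- x)%R -> PB ord x ->
  in_universal_GB (toric_ideal n) x.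
Proof.
move=> hv hP; have [G [hG hGm]] := GB_exists ord.
exists ord, G; split=> //; apply/hGm; split=> //.
by case: hv => /inV_L [] //; rewrite opprK.
Qed.

Lemma part2_Vp j : j < n ->
  in_universal_GB (toric_ideal n) (Vp n j) \/ in_universal_GB (toric_ideal n) (- Vp n j)%R.
Proof.
move=> hj; set ord := ordW 0.
have hv : inV n (Vp n j) by left; exists j.
have e := phi_S hj.
case: (classic (ord (SA n j) (SB n j))) => h.
  right; apply: inUGB_of; first by right; rewrite opprK.
  have nh : ~ ord (SB n j) (SA n j).
    move=> h'; have := ord_anti h h' => eq.
    have := congr1 (fun m => at_ m (3 * n)) eq; rewrite /SA /SB /= !at_D !E_at //; lia.
  exists (SB n j), (SA n j); split.
  - by rewrite Vp_X // opprB.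
  - exact: minNS2 (mdeg_SB hj) e nh.
  - exact: e.
  - exact: nh.
left; apply: inUGB_of; first by left.
exists (SA n j), (SB n j); split.
- by rewrite Vp_X.
- exact: minNS2 (mdeg_SA hj) (esym e) h.
- exact: esym e.
- exact: h.
Qed.

Lemma part2_Vpp i j : i < j -> j < n -> in_universal_GB (toric_ideal n) (Vpp n i j).
Proof.
move=> hij hj; have hi : i < n by lia.
set q := 3 * j + 1; set ord := ordW q.
apply: inUGB_of; first by left; right; exists i, j; split=> //; lia.
have atTA : forall a b t, a < n -> b < n -> t < k ->
    at_ (TA n a b) t = (t == 3 * a) + (t == 3 * a + 2) + (t == 3 * b + 1).
  by move=> a b t ha hb ht; rewrite /TA !at_D !E_at.
have w1 : wt q (TA n i j) = 1.
  rewrite /wt !atTA //; try lia.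
have w2 : wt q (TA n j i) = 0.
  rewrite /wt !atTA //; try lia.
have nuw : ~ ord (TA n i j) (TA n j i) by apply: ordW_nle; lia.
exists (TA n i j), (TA n j i); split.
- by rewrite Vpp_X.
- split; first by move=> hs; apply: nuw; apply: hs; rewrite phi_T.
  move=> u' hu' ne; apply: NNPP => ns.
  have hd : mdeg u' < 3 by have := lepm_mdeg_lt hu' ne; rewrite mdeg_TA.
  have [u [hu hm]] := exists_minNS ns.
  have [w [e nuw'']] := NS_wit hm.1.
  have hdu := mdeg_le hu.
  have hle := lepm_trans hu hu'.
  case: (comb hm e nuw'') => [[l [hl [[eu ew]|[eu ew]]]]|[a [b [hab hb [[eu _]|[eu _]]]]]]; subst u.
  + subst w; apply: nuw''; apply: ordW_lt.
    rewrite /wt /SA /SB !at_D !E_at //; try lia.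
  + have := at_le (3 * n) hle; rewrite atTA // /SB !at_D !E_at //; lia.
  + by move: hdu; rewrite mdeg_TA //; lia.
  + by move: hdu; rewrite mdeg_TA //; lia.
- exact: esym (phi_T hi hj).
- exact: nuw.
Qed.

End SecG.

Local Open Scope ring_scope.

Theorem mainTheorem7 (n : nat) (hn : (1 <= n)%N) :
  (forall g : {mpoly C[(3 * n).+1]},
     in_universal_GB (toric_ideal n) g -> exists2 v, inV n v & (g = v \/ g = - v)) /\
  (forall v : {mpoly C[(3 * n).+1]},
     inV n v -> in_universal_GB (toric_ideal n) v \/ in_universal_GB (toric_ideal n) (- v)).
Proof.
split.
  move=> g [ord [G [hG hg]]].
  have [u [w [-> hm e nuw]]] := part1 hG hg.
  exact: shape_poly (comb hm e nuw).
move=> v [[j hj ->]|[i [j [/andP [hij hj] ->]]]].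
  exact: part2_Vp.
by left; apply: part2_Vpp.
Qed.
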